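(* Let $q=p^f$ with $p$ prime, $n=q+1$, and let $\mathbf{A}\in\mathrm{GL}_n(q)$ be the matrix defined in the context. Let $\mathcal{C}$ be an $\langle\mathbf{A}\rangle$-irreducible linear $[n,k]_q$ code. Then either $k=2$, or $k=1$, $q$ is even and $\mathcal{C}$ is spanned by the vector $(1,1,\ldots,1)$. If further $\mathcal{C}$ is faithful, then $\langle\mathbf{A}\rangle$ acts regularly on the set of nonzero codewords of $\mathcal{C}$; in particular, $\mathcal{C}$ is an equidistant linear $[n,2]_q$ code of weight $q$.
   Context: A linear $[n,k]_q$ code is a $k$-dimensional subspace of the row space $\mathbb{F}_q^n$; the weight of a vector is its number of nonzero coordinates; a code is equidistant of weight $\omega$ if all nonzero codewords have weight $\omega$. Write the multiplicative group $\mathbb{F}_q^*=\langle\eta,\lambda\rangle$ where $\lambda$ has odd order and $\eta$ has order a power of $2$. Let $\mathbf{D}$ be the $n\times n$ diagonal matrix $\mathrm{diag}(\eta\lambda,\lambda,\eta\lambda,\ldots,\eta\lambda)$ (first entry $\eta\lambda$, second entry $\lambda$, remaining $n-2$ entries $\eta\lambda$), let $\mathbf{P}=\begin{pmatrix}\mathbf{0}' & \mathbf{I}_{n-1}\\ 1 & \mathbf{0}\end{pmatrix}$ (where $\mathbf{0}'$ is the zero column of length $n-1$ and $\mathbf{0}$ the zero row of length $n-1$), and $\mathbf{A}=\mathbf{D}\mathbf{P}$, acting on $\mathbb{F}_q^n$ by right multiplication of row vectors. A code $\mathcal{C}$ is $\langle\mathbf{A}\rangle$-invariant if $\mathbf{u}\mathbf{A}\in\mathcal{C}$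 for all $\mathbf{u}\in\mathcal{C}$; an $\langle\mathbf{A}\rangle$-invariant $[n,k]_q$ code is $\langle\mathbf{A}\rangle$-irreducible if it contains no $\langle\mathbf{A}\rangle$-invariant $[n,k']_q$ code with $1\leqslant k'<k$, and faithful if no nonidentity element of $\langle\mathbf{A}\rangle$ fixes $\mathcal{C}$ pointwise. *)

(* Defs.v *)
From HB Require Import structures.
From mathcomp Require Import all_boot all_order all_algebra.
Set Implicit Arguments. Unset Strict Implicit. Unset Printing Implicit Defensive.
Import GRing.Theory.
Local Open Scope ring_scope.

(* Linear codes of length n over F are represented (as in mxalgebra) by the
   row space of a matrix C : 'M[F]_n; its dimension k is \rank C. *)

Section Defs.
Variable F : fieldType.
Variable n : nat.

Definition Dmat (eta lam : F) : 'M[F]_n :=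
  diag_mx (\row_(i < n) (if (i : nat) == 1%N then lam else eta * lam)).

(* P = [[0', I_(n-1)], [1, 0]] : P i j = 1 iff j = i+1 (mod n) *)
Definition Pmat : 'M[F]_n :=
  \matrix_(i < n, j < n) (((j : nat) == (i.+1 %% n)%N)%:R : F).

Definition Amat (eta lam : F) : 'M[F]_n := Dmat eta lam *m Pmat.

Definition invariant (A C : 'M[F]_n) : Prop := (C *m A <= C)%MS.

Definition irreducible_code (A C : 'M[F]_n) : Prop :=
  invariant A C /\
  forall C' : 'M[F]_n, (C' <= C)%MS -> invariant A C' ->
    ~ (0 < \rank C' < \rank C)%N.

Definition faithful_code (A C : 'M[F]_n) : Prop :=
  forall m : nat,
    (forall u : 'rV[F]_n, (u <= C)%MS -> u *m A ^+ m = u) -> A ^+ m = 1%:M.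

Definition acts_regularly (A C : 'M[F]_n) : Prop :=
  (forall u v : 'rV[F]_n, (u <= C)%MS -> u != 0 -> (v <= C)%MS -> v != 0 ->
     exists m : nat, u *m A ^+ m = v) /\
  (forall (u : 'rV[F]_n) (m : nat), (u <= C)%MS -> u != 0 ->
     u *m A ^+ m = u -> A ^+ m = 1%:M).

Definition wt (u : 'rV[F]_n) : nat := #|[set j : 'I_n | u 0 j != 0]|.

Definition equidistant (C : 'M[F]_n) (w : nat) : Prop :=
  forall u : 'rV[F]_n, (u <= C)%MS -> u != 0 -> wt u = w.

End Defs.

Arguments Dmat {F n}.
Arguments Pmat {F n}.
Arguments Amat {F n}.

(* Main.v *)
Require Import Defs.
From HB Require Import structures.
From mathcomp Require Import all_boot all_order all_algebra all_field.
From mathcomp Require Import zify.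
Require Import Defs.
Set Implicit Arguments. Unset Strict Implicit. Unset Printing Implicit Defensive.
Import GRing.Theory.
Local Open Scope ring_scope.

Section S.
Variable F : finFieldType.
Variables eta lam : F.
Hypothesis eta0 : eta != 0.
Hypothesis lam0 : lam != 0.
Local Notation q := #|F|.
Local Notation n := (#|F|.+1).
Local Notation A := (Amat eta lam : 'M[F]_n).

Definition dd (k : nat) : F := if k == 1%N then lam else eta * lam.

Lemma dd_neq0 k : dd k != 0.
Proof. by rewrite /dd; case: ifP => _ //; rewrite mulf_neq0. Qed.

Lemma A_entry i j : A i j = ((j:nat) == (i.+1 %% n)%N)%:R * dd i.
Proof.
rewrite /Amat /Dmat mul_diag_mx !mxE mulrC /dd; by [].
Qed.

Lemma Apow_entry s i j : (A ^+ s) i j =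
  ((j:nat) == ((i + s) %% n)%N)%:R * \prod_(t < s) dd ((i + t) %% n).
Proof.
elim: s j => [|s IH] j.
  rewrite expr0 big_ord0 mulr1 addn0 modn_small // !mxE eq_sym; by [].
have lt : ((i + s) %% n < n)%N by rewrite ltn_mod.
rewrite exprSr -mulmxE !mxE (bigD1 (Ordinal lt)) //= big1 ?addr0; last first.
  move=> k /eqP nk; rewrite IH; case: eqP => [e|]; last by rewrite !mul0r.
  by case: nk; apply: val_inj.
rewrite IH /= eqxx mul1r A_entry big_ord_recr /=.
have -> : ((((i+s) %% n).+1 %% n) = (i + s.+1) %% n)%N.
  by rewrite -[_.+1]addn1 modnDml addn1 addnS.
by rewrite mulrCA mulrA.
Qed.

Definition G (i : nat) (s : nat) : F := \prod_(t < s) dd ((i + t) %% n).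

Lemma G_neq0 i s : G i s != 0.
Proof. by apply/prodf_neq0 => t _; apply: dd_neq0. Qed.

Definition sh (j : 'I_n) (s : nat) : 'I_n := inord ((j + s) %% n).

Lemma transport (y : 'rV[F]_n) s j : (y *m A ^+ s) 0 (sh j s) = y 0 j * G j s.
Proof.
rewrite !mxE (bigD1 j) //= big1 ?addr0; last first.
  move=> k nk; rewrite Apow_entry /sh inordK ?ltn_mod //.
  rewrite eq_sym eqn_modDr modn_small // modn_small // .
  by rewrite (negbTE (nk : (k:nat) != j)) mul0r mulr0.
by rewrite Apow_entry /sh inordK ?ltn_mod // eqxx mul1r.
Qed.

Definition c : F := lam * (eta * lam) ^+ q.

Lemma prod_rot (f : nat -> F) (i : 'I_n) :
  \prod_(t < n) f ((i + t) %% n)%N = \prod_(t < n) f t.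
Proof.
pose h (t : 'I_n) : 'I_n := inord ((i + t) %% n).
have hinj : injective h.
  move=> a b /(congr1 val); rewrite /h /= !inordK ?ltn_mod // => /eqP.
  by rewrite eqn_modDl !modn_small // => /eqP /val_inj.
rewrite [RHS](reindex_inj hinj) /=; apply: eq_bigr => t _.
by rewrite /h inordK ?ltn_mod.
Qed.

Lemma c_prod : \prod_(t < n) dd t = c.
Proof.
have q1 : (1 < n)%N by rewrite ltnS ltnW // finNzRing_gt1.
rewrite (bigD1 (Ordinal q1)) //= /dd eqxx /c; congr (_ * _).
rewrite (eq_bigr (fun _ => eta * lam)); last first.
  by move=> t /negbTE; rewrite -val_eqE /= => ->.
by rewrite prodr_const cardC1 card_ord.
Qed.

Lemma c_neq0 : c != 0.
Proof. by rewrite /c mulf_neq0 // expf_neq0 // mulf_neq0. Qed.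

Lemma An : A ^+ n = c%:M.
Proof.
apply/matrixP => i j; rewrite Apow_entry !mxE modnDr modn_small //.
by rewrite -c_prod (prod_rot dd i) eq_sym mulr_natl.
Qed.

Lemma q_gt1 : (1 < q)%N.
Proof. exact: finNzRing_gt1. Qed.

Lemma pow_gcd (x : F) a b : (0 < a)%N -> x ^+ a = 1 -> x ^+ b = 1 ->
  x ^+ (gcdn a b) = 1.
Proof.
move=> a0 xa xb; case: (egcdnP b a0) => km kn E _.
have : x ^+ (km * a) = x ^+ (kn * b + gcdn a b) by rewrite E.
by rewrite exprD mulnC exprM xa expr1n [(kn * b)%N]mulnC exprM xb expr1n mul1r => <-.
Qed.

Lemma expf_q1 (x : F) : x != 0 -> x ^+ q.-1 = 1.
Proof.
move=> x0; have qp : (0 < q)%N by rewrite ltnW // q_gt1.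
by apply: (mulfI x0); rewrite mulr1 -exprS prednK // expf_card.
Qed.

Lemma c_eq : c = eta ^+ q * lam ^+ q.+1.
Proof. by rewrite /c exprMn exprS mulrCA. Qed.

Variables (a m0 : nat).
Hypothesis eta_a : eta ^+ (2 ^ a) = 1.
Hypothesis m0_odd : odd m0.
Hypothesis lam_m0 : lam ^+ m0 = 1.
Hypothesis gen : forall x : F, x != 0 -> exists i j : nat, x = eta ^+ i * lam ^+ j.

Lemma c_gen x : x != 0 -> exists t, x = c ^+ t.
Proof.
move=> x0.
have q0 : (0 < q)%N by rewrite ltnW // q_gt1.
pose M := gcdn m0 q.-1.
have m0p : (0 < m0)%N by case: (m0) m0_odd.
have lamM : lam ^+ M = 1 by apply: pow_gcd => //; apply: expf_q1.
have Modd : odd M by apply: (dvdn_odd (dvdn_gcdl _ _)).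
have a2p : (0 < 2 ^ a)%N by rewrite expn_gt0.
have cop2 : coprime (2 ^ a) M by apply: coprimeXl; rewrite coprime2n.
have copq : coprime q.+1 M.
  have /dvdnP [r Er] : (M %| q.-1)%N by apply: dvdn_gcdr.
  have -> : q.+1 = (r * M + 2)%N by rewrite -Er; lia.
  by rewrite /coprime gcdnC gcdnMDl -/(coprime M 2) coprimen2.
have Kp : (0 < q.+1 * 2 ^ a)%N by rewrite muln_gt0.
have [e2 He2] : exists e2, lam = c ^+ e2.
  case: (egcdnP M Kp) => km kn E _.
  have g1 : coprime (q.+1 * 2 ^ a) M by rewrite coprimeMl copq cop2.
  exists (2 ^ a * km)%N; rewrite exprM.
  have -> : c ^+ (2 ^ a) = lam ^+ (q.+1 * 2 ^ a).
    rewrite c_eq exprMn -!exprM mulnC exprM eta_a expr1n mul1r; by [].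
  rewrite -exprM [(_ * km)%N]mulnC E (eqP g1) exprD [(kn * M)%N]mulnC exprM lamM expr1n mul1r expr1; by [].
have [e1 He1] : exists e1, eta = c ^+ e1.
  case: (boolP (odd q)) => qodd.
    have cop : coprime (q * M) (2 ^ a).
      by rewrite coprimeMl !coprimeXr ?coprimen2.
    have qMp : (0 < q * M)%N by rewrite muln_gt0 q0; case: (M) Modd.
    case: (egcdnP (2 ^ a) qMp) => km kn E _.
    exists (M * km)%N; rewrite exprM.
    have -> : c ^+ M = eta ^+ (q * M).
      by rewrite c_eq exprMn -!exprM [(q.+1 * M)%N]mulnC [lam ^+ (M * _)]exprM lamM expr1n mulr1.
    rewrite -exprM [(_ * km)%N]mulnC E (eqP cop) exprD [(kn * _)%N]mulnC exprM eta_a expr1n mul1r expr1; by [].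
  exists 0%N; rewrite expr0.
  have cop : coprime (2 ^ a) q.-1.
    by apply: coprimeXl; rewrite coprime2n; move: qodd q0; case: (q) => //= k; rewrite negbK.
  have := pow_gcd a2p eta_a (expf_q1 eta0); rewrite (eqP cop) expr1; by [].
case: (gen x0) => i [j ->]; exists (e1 * i + e2 * j)%N.
by rewrite exprD !exprM He1 He2.
Qed.

Lemma c_ord k : c ^+ k = 1 -> (q.-1 %| k)%N.
Proof.
move=> ck.
have all1 : forall x : F, x != 0 -> x ^+ (k %% q.-1) = 1.
  move=> x x0; case: (c_gen x0) => t ->.
  move: ck; rewrite {1}(divn_eq k q.-1) exprD => /eqP.
  rewrite mulnC exprM expf_q1 ?c_neq0 // expr1n mul1r => /eqP e.
  by rewrite -exprM mulnC exprM e expr1n.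
apply/negPn/negP => nd.
have r0 : (0 < k %% q.-1)%N by rewrite lt0n.
pose P : {poly F} := 'X^(k %% q.-1) - 1.
have P0 : P != 0 by rewrite -size_poly_eq0 size_XnsubC.
have allr : all (root P) (enum (predC1 (0:F))).
  apply/allP => x; rewrite mem_enum /= => x0.
  by rewrite /root /P !hornerE all1 // subrr.
have := max_poly_roots P0 allr (enum_uniq _).
rewrite -cardE cardC1 size_XnsubC // ltnS leqNgt ltn_mod.
by have -> : (0 < q.-1)%N by have := q_gt1; case: (q) => // [[]].
Qed.

Lemma Apow_nk k : A ^+ (n * k) = (c ^+ k)%:M.
Proof. by rewrite exprM An rmorphXn. Qed.

Lemma Aunit (v : 'rV[F]_n) k : v *m A ^+ k = 0 -> v = 0.
Proof.
move=> vk; have : v *m A ^+ (n * k) = 0.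
  by rewrite mulSn exprD mulmxA vk mul0mx.
rewrite Apow_nk mul_mx_scalar => /eqP; rewrite scalemx_eq0 expf_eq0 (negbTE c_neq0) andbF /=.
by move/eqP.
Qed.

Lemma A_shift m : A ^+ m = 1%:M -> (m %% n = 0)%N.
Proof.
move=> /(congr1 (fun M : 'M[F]_n => M 0 (inord (m %% n)))).
rewrite Apow_entry !mxE inordK ?ltn_mod // add0n eqxx mul1r.
case: eqP => [/(congr1 val)|_ /eqP]; last by rewrite (negbTE (G_neq0 0 m)).
by rewrite /= inordK ?ltn_mod // => <-.
Qed.

Lemma A_order m : A ^+ m = 1%:M -> (n * q.-1 %| m)%N.
Proof.
move=> Am; have mn := A_shift Am.
have Em : m = (n * (m %/ n))%N by rewrite {1}(divn_eq m n) mn addn0 mulnC.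
move: Am; rewrite Em Apow_nk => /(congr1 (fun M : 'M[F]_n => M 0 0)).
rewrite !mxE eqxx /= !mulr1n => /c_ord.
by rewrite dvdn_pmul2l.
Qed.

Lemma stX (C : 'M[F]_n) (k : nat) : invariant A C -> (C *m (A ^+ k)%R <= C)%MS.
Proof.
move=> st; elim: k => [|k IH]; first by rewrite expr0 mulmx1.
by rewrite exprSr mulmxA; apply: submx_trans (submxMr _ IH) st.
Qed.

Lemma irr_kill (C M : 'M[F]_n) (u : 'rV[F]_n) :
  irreducible_code A C -> M *m A = A *m M ->
  (u <= C)%MS -> u != 0 -> u *m M = 0 -> (C <= kermx M)%MS.
Proof.
move=> [st irr] MA uC u0 uM.
pose W := (C :&: kermx M)%MS.
have WC : (W <= C)%MS by apply: capmxSl.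
have WM : W *m M = 0 by apply/sub_kermxP; apply: capmxSr.
have stW : invariant A W.
  rewrite /invariant sub_capmx; apply/andP; split.
    by apply: submx_trans (submxMr _ WC) st.
  by apply/sub_kermxP; rewrite -mulmxA -MA mulmxA WM mul0mx.
have uW : (u <= W)%MS by rewrite sub_capmx uC; apply/sub_kermxP.
have rW : (0 < \rank W)%N.
  apply: leq_trans (mxrankS uW); by rewrite lt0n mxrank_eq0.
have : (\rank C <= \rank W)%N.
  by rewrite leqNgt; apply/negP => h; apply: (irr W WC stW); rewrite rW h.
rewrite (geq_leqif (mxrank_leqif_sup WC)) => CW.
by apply: submx_trans CW (capmxSr _ _).
Qed.

Lemma stab_pow (C : 'M[F]_n) (u : 'rV[F]_n) m :
  irreducible_code A C -> faithful_code A C ->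
  (u <= C)%MS -> u != 0 -> u *m A ^+ m = u -> A ^+ m = 1%:M.
Proof.
move=> irr fth uC u0 um; apply: fth => w wC.
have comm : (A ^+ m - 1%:M) *m A = A *m (A ^+ m - 1%:M).
  by rewrite mulmxBl mulmxBr mul1mx mulmx1 !mulmxE -exprSr -exprS.
have := irr_kill irr comm uC u0.
rewrite mulmxBr mulmx1 um subrr => /(_ erefl) CK.
have /sub_kermxP := submx_trans wC CK.
by rewrite mulmxBr mulmx1 => /eqP; rewrite subr_eq0 => /eqP.
Qed.

Variables (p f : nat).
Hypothesis p_prime : prime p.
Hypothesis cardF : #|F| = (p ^ f)%N.

Lemma A_qq : A ^+ (q * q) = A.
Proof.
have q0 : (0 < q)%N by rewrite ltnW // q_gt1.
have -> : (q * q = n * q.-1 + 1)%N by move: q0; case: (q) => // k _ /=; lia.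
by rewrite exprD Apow_nk expf_q1 ?c_neq0 // expr1 mul1r.
Qed.

Local Notation B := (A ^+ q + A).

Lemma hX : horner_mx A 'X = A.
Proof. exact: horner_mx_X. Qed.

Lemma frob : B ^+ q = B.
Proof.
have pc : p \in [pchar F] := card_finPcharP cardF p_prime.
have pn : [pchar {poly F}].-nat q.
  by rewrite cardF pnatX (eq_pnat _ (pchar_lalg _)) pnatE // pc.
have hB : horner_mx A ('X^q + 'X) = B.
  by rewrite rmorphD rmorphXn; congr (_ ^+ _ + _); apply: hX.
rewrite -hB -rmorphXn exprDn_pchar // -exprM rmorphD !rmorphXn /= !horner_mx_X.
by rewrite A_qq addrC.
Qed.

Lemma prodB : \prod_(x : F) (B - x%:M) = 0.
Proof.
have := congr1 (horner_mx B) (@finField_genPoly F).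
rewrite rmorphB rmorphXn /= horner_mx_X frob subrr rmorph_prod => /esym <-.
by apply: eq_bigr => x _; rewrite rmorphB /= horner_mx_X horner_mx_C.
Qed.

Lemma commB x : (B - x%:M) *m A = A *m (B - x%:M).
Proof.
have h : GRing.comm A (B - x%:M).
  apply: commrB; last by rewrite /GRing.comm -!mulmxE scalar_mxC.
  by apply: commrD; [apply: commrX|]; apply: commr_refl.
by rewrite !mulmxE h.
Qed.

Lemma stB (C : 'M[F]_n) x : invariant A C -> (C *m (B - x%:M) <= C)%MS.
Proof.
move=> st; apply: stablemxD; first by apply: stablemxD => //; apply: stX.
by rewrite stablemxN; apply: stablemxC.
Qed.

Lemma find_factor (C : 'M[F]_n) (s : seq F) (u : 'rV[F]_n) :
  irreducible_code A C -> (u <= C)%MS -> u != 0 ->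
  u *m \prod_(x <- s) (B - x%:M) = 0 -> exists x, (C <= kermx (B - x%:M))%MS.
Proof.
move=> irr; elim: s u => [|x s IH] u uC u0.
  by rewrite big_nil mulmx1 => u00; move: u0; rewrite u00 eqxx.
rewrite big_cons -mulmxE mulmxA => h.
case: (eqVneq (u *m (B - x%:M)) 0) => [ux|ux].
  by exists x; apply: (irr_kill irr (commB x) uC u0 ux).
apply: (IH _ _ ux h); apply: submx_trans (submxMr _ uC) _.
by apply: stB; case: irr.
Qed.

Definition Q x := A ^+ 2 - x *: A + c%:M.

Lemma quad (C : 'M[F]_n) : irreducible_code A C -> (0 < \rank C)%N ->
  exists x, (C <= kermx (Q x))%MS.
Proof.
move=> irr rC.
have /rowV0Pn [u uC u0] : C != 0 by rewrite -mxrank_eq0 -lt0n.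
have := @find_factor C (index_enum F) u irr uC u0.
rewrite prodB mulmx0 => /(_ erefl) [x Cx]; exists x.
apply/sub_kermxP; move/sub_kermxP: Cx => Cx.
have -> : Q x = (B - x%:M) *m A.
  rewrite /Q mulmxBl mulmxDl !mulmxE -exprSr -expr2 An -mulmxE mul_scalar_mx.
  by rewrite [c%:M + _]addrC addrAC.
by rewrite mulmxA Cx mul0mx.
Qed.

Lemma span_inv (C : 'M[F]_n) (u : 'rV[F]_n) x :
  (C <= kermx (Q x))%MS -> (u <= C)%MS -> invariant A (u + u *m A)%MS.
Proof.
move=> CQ uC; have /sub_kermxP/eqP := submx_trans uC CQ.
rewrite /Q mulmxDr mulmxBr -scalemxAr mul_mx_scalar addr_eq0 subr_eq => /eqP h.
rewrite /invariant addsmxMr addsmx_sub addsmxSr /= -mulmxA mulmxE -expr2 h.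
by rewrite -scaleNr; apply: addmx_sub; apply: scalemx_sub; [apply: addsmxSl | apply: addsmxSr].
Qed.

Lemma rank_sp (u : 'rV[F]_n) : (\rank (u + u *m A)%MS <= 2)%N.
Proof.
apply: leq_trans (mxrank_adds_leqif u (u *m A)).1 _.
by apply: (@leq_add _ _ 1 1); apply: rank_leq_row.
Qed.

Lemma span_big (C : 'M[F]_n) (u : 'rV[F]_n) x :
  irreducible_code A C -> (C <= kermx (Q x))%MS -> (u <= C)%MS -> u != 0 ->
  (C <= u + u *m A)%MS.
Proof.
move=> [st irr] CQ uC u0.
have WC : ((u + u *m A)%MS <= C)%MS.
  by rewrite addsmx_sub uC /=; apply: submx_trans (submxMr _ uC) st.
have rW : (0 < \rank (u + u *m A)%MS)%N.
  apply: leq_trans (mxrankS (addsmxSl u (u *m A))); by rewrite lt0n mxrank_eq0.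
have : (\rank C <= \rank (u + u *m A)%MS)%N.
  rewrite leqNgt; apply/negP => h.
  by apply: (irr _ WC (span_inv CQ uC)); rewrite rW h.
by rewrite (geq_leqif (mxrank_leqif_sup WC)).
Qed.

Lemma rank1 (C : 'M[F]_n) : irreducible_code A C -> \rank C = 1%N ->
  exists (u : 'rV[F]_n) b, [/\ (u <= C)%MS, u != 0, (C <= u)%MS,
     (forall k, u *m A ^+ k = b ^+ k *: u) & b ^+ n = c].
Proof.
move=> [st irr] r1.
have /rowV0Pn [u uC u0] : C != 0 by rewrite -mxrank_eq0 r1.
have Cu : (C <= u)%MS.
  by rewrite -(geq_leqif (mxrank_leqif_sup uC)) r1 rank_rV u0.
have /sub_rVP [b ub] : (u *m A <= u)%MS.
  by apply: submx_trans Cu; apply: submx_trans (submxMr _ uC) st.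
have uk : forall k, u *m A ^+ k = b ^+ k *: u.
  elim=> [|k IH]; first by rewrite expr0 mulmx1 scale1r.
  by rewrite exprSr mulmxA IH -scalemxAl ub scalerA -exprSr.
exists u, b; split => //.
have := uk n; rewrite An mul_mx_scalar => /eqP; rewrite -subr_eq0 -scalerBl.
rewrite scalemx_eq0 (negbTE u0) orbF subr_eq0 => /eqP //.
Qed.

Lemma const_span (u : 'rV[F]_n) (C : 'M[F]_n) : (u <= C)%MS -> (C <= u)%MS ->
  (forall j, u 0 j = u 0 0) -> u != 0 -> (C :=: (const_mx 1 : 'rV[F]_n))%MS.
Proof.
move=> uC Cu uj u0.
have ue : u = u 0 0 *: const_mx 1.
  by apply/matrixP => i j; rewrite !mxE (ord1 i) uj mulr1.
have u00 : u 0 0 != 0 by apply: contraNneq u0 => h; rewrite ue h scale0r.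
apply/eqmxP; rewrite /eqmx; apply/andP; split.
  by apply: submx_trans Cu _; rewrite {1}ue; apply: scalemx_sub.
by apply: submx_trans uC; rewrite ue eqmx_scale.
Qed.

Lemma part1 (C : 'M[F]_n) : (0 < \rank C)%N -> irreducible_code A C ->
  (\rank C <= 2)%N /\
  (\rank C = 1%N -> ~~ odd #|F| /\ (C :=: (const_mx 1 : 'rV[F]_n))%MS).
Proof.
move=> rC irr.
have [x CQ] := quad irr rC.
have /rowV0Pn [u uC u0] : C != 0 by rewrite -mxrank_eq0 -lt0n.
split; first exact: leq_trans (mxrankS (span_big irr CQ uC u0)) (rank_sp u).
move=> r1; have [{}u [b [{}uC {}u0 Cu ub bn]]] := rank1 irr r1.
have b0 : b != 0 by apply: contraNneq c_neq0 => b00; rewrite -bn b00 expr0n.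
have q2 := q_gt1.
case: (boolP (odd q)) => qodd.
  exfalso; pose k := q./2.
  have qk : q = k.*2.+1 by rewrite -[q in LHS]odd_double_half qodd add1n.
  have : c ^+ k = 1.
    rewrite -bn -exprM.
    have -> : (n * k = q.-1 * k.+1)%N by rewrite qk /= -!addnn; lia.
    by rewrite exprM expf_q1 // expr1n.
  move/c_ord/(dvdn_leq _); rewrite qk /=.
  have k0 : (0 < k)%N by move: q2; rewrite qk; case: (k).
  by move/(_ k0); rewrite -addnn; lia.
split => //.
have eta1 : eta = 1.
  have cop : coprime (2 ^ a) q.-1.
    apply: coprimeXl; rewrite coprime2n; move: qodd q2; case: (q) => //= k.
    by rewrite negbK.
  have := pow_gcd (expn_gt0 2 a) eta_a (expf_q1 eta0); rewrite (eqP cop) expr1; by [].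
have ddl : forall k, dd k = lam by move=> k; rewrite /dd eta1 mul1r; case: ifP.
have bl : b = lam.
  pose s := b / lam.
  have s2 : s ^+ 2 = 1.
    have e1 : forall y : F, y ^+ n = y ^+ 2 by move=> y; rewrite exprS expf_card -expr2.
    have : b ^+ n = lam ^+ n by rewrite bn /c eta1 mul1r -exprS.
    by rewrite !e1 /s exprMn exprVn => ->; rewrite mulfV // expf_neq0.
  have s0 : s != 0 by rewrite /s mulf_neq0 // invr_eq0.
  have cop : coprime 2 q.-1.
    by rewrite coprime2n; move: qodd q2; case: (q) => //= k; rewrite negbK.
  have := pow_gcd (isT : (0 < 2)%N) s2 (expf_q1 s0); rewrite (eqP cop) expr1 /s.
  exact: divr1_eq.
apply: (const_span uC Cu _ u0).
have step : forall j : 'I_n, u 0 (sh j 1) = u 0 j.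
  move=> j; have := transport u 1 j.
  rewrite ub expr1 bl !mxE /G big_ord1 addn0 modn_small // ddl mulrC.
  by move/(mulIf lam0).
have gen0 : forall k, (k < n)%N -> u 0 (inord k) = u 0 0.
  elim=> [|k IH] kn; first by congr (u 0 _); apply: val_inj; rewrite /= inordK.
  rewrite -(IH (ltnW kn)) -[u 0 (inord k)]step; congr (u 0 _); apply: val_inj.
  have kn' : (k < n)%N := ltnW kn.
  rewrite /sh /= (inordK kn') addn1 (modn_small kn) inordK //.
by move=> j; rewrite -(gen0 j) // ?inord_val.
Qed.

Lemma dec (C : 'M[F]_n) (z y : 'rV[F]_n) : (C <= z + z *m A)%MS -> (y <= C)%MS ->
  exists al be : F, y = al *: z + be *: (z *m A).
Proof.
move=> Cz yC; have /sub_addsmxP [r ->] := submx_trans yC Cz.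
by exists (r.1 0 0), (r.2 0 0); rewrite -!mul_scalar_mx -!mx11_scalar.
Qed.

Lemma exp_eqN (C : 'M[F]_n) (u : 'rV[F]_n) e1 e2 :
  irreducible_code A C -> faithful_code A C -> (u <= C)%MS -> u != 0 ->
  (e1 <= e2)%N -> u *m A ^+ e1 = u *m A ^+ e2 -> (n * q.-1 %| e2 - e1)%N.
Proof.
move=> irr fth uC u0 le h.
have h2 : (u *m A ^+ e1) *m A ^+ (e2 - e1) = u *m A ^+ e1.
  by rewrite -mulmxA mulmxE -exprD subnKC.
apply: A_order; apply: (stab_pow irr fth _ _ h2).
  by apply: submx_trans (submxMr _ uC) (stX _ _); case: irr.
by apply: contra u0 => /eqP /Aunit ->.
Qed.

Lemma one_dim (C : 'M[F]_n) x (z z' : 'rV[F]_n) :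
  irreducible_code A C -> (C <= kermx (Q x))%MS -> (z <= C)%MS -> z != 0 ->
  z 0 0 = 0 -> (z' <= C)%MS -> z' 0 0 = 0 -> exists l, z' = l *: z.
Proof.
move=> irr CQ zC z0 z00 z'C z'00.
have Cz := span_big irr CQ zC z0.
have [al [be z'e]] := dec Cz z'C.
have sh0 : sh ord_max 1 = 0.
  apply: val_inj; rewrite /= inordK ?ltn_mod // addn1.
  change ((q.+1 %% q.+1)%N = 0%N); exact: modnn.
have zA0 : (z *m A) 0 0 = z 0 ord_max * G q 1.
  by have := transport z 1 ord_max; rewrite expr1 sh0 => ->.
have E : forall (M1 M2 : 'rV[F]_n) (a b : F), (a *: M1 + b *: M2) 0 0 = a * M1 0 0 + b * M2 0 0.
  by move=> *; rewrite !mxE.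
move: z'00; rewrite z'e E z00 mulr0 add0r zA0 => /eqP.
rewrite !mulf_eq0 (negbTE (G_neq0 _ _)) orbF.
case: (eqVneq be 0) => [be0 _|_ /= /eqP zmax].
  by exists al; rewrite be0 scale0r addr0.
exfalso; move: z0 => /negP; apply; apply/eqP/matrixP => i j.
rewrite (ord1 i) mxE.
have allC : forall y : 'rV[F]_n, (y <= C)%MS -> y 0 0 = 0.
  move=> y yC; have [al' [be' ->]] := dec Cz yC.
  by rewrite E z00 zA0 zmax !mul0r !mulr0 addr0.
have yC : (z *m A ^+ (n - j) <= C)%MS.
  by apply: submx_trans (submxMr _ zC) (stX _ _); case: irr.
have := transport z (n - j) j.
have -> : sh j (n - j) = 0.
  apply: val_inj; rewrite /= inordK ?ltn_mod // subnKC; [exact: modnn | exact: ltnW].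
rewrite (allC _ yC) => /eqP; rewrite eq_sym mulf_eq0 (negbTE (G_neq0 _ _)) orbF.
by move/eqP.
Qed.

Lemma zero_vec (C : 'M[F]_n) : irreducible_code A C -> \rank C = 2%N ->
  exists w : 'rV[F]_n, [/\ (w <= C)%MS, w != 0 & w 0 0 = 0].
Proof.
move=> [st irr] r2.
have /rowV0Pn [u uC u0] : C != 0 by rewrite -mxrank_eq0 r2.
case: (eqVneq (u 0 0) 0) => [h|h]; first by exists u.
have uAC : (u *m A <= C)%MS by apply: submx_trans (submxMr _ uC) st.
exists ((u *m A) 0 0 *: u - u 0 0 *: (u *m A)); split.
- by apply: addmx_sub; [apply: scalemx_sub|rewrite -scaleNr; apply: scalemx_sub].
- apply/negP => /eqP w0; apply: (irr <<u>>%MS).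
  + by rewrite genmxE.
  + rewrite /invariant (eqmxMr _ (genmxE u)) genmxE.
    have : (u 0 0)^-1 *: ((u *m A) 0 0 *: u) = u *m A.
      by move/eqP: w0; rewrite subr_eq0 => /eqP ->; rewrite scalerA mulVf // scale1r.
    by move=> <-; apply: scalemx_sub; apply: scalemx_sub.
  + by rewrite genmxE rank_rV u0 r2.
- by rewrite !mxE mulrC subrr.
Qed.

Lemma sh_n (j : 'I_n) : sh j (n - j) = 0.
Proof.
apply: val_inj; rewrite /= inordK ?ltn_mod // subnKC; [exact: modnn | exact: ltnW].
Qed.

Lemma modfact (i j t : nat) : (i < n)%N -> (j < n)%N ->
  ((n - j) %% n = (n - i + n * t) %% n)%N -> i = j.
Proof.
move=> ilt jlt; rewrite addnC mulnC modnMDl => /eqP.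
rewrite -(eqn_modDr (i + j)).
have -> : (n - j + (i + j) = n + i)%N by lia.
have -> : (n - i + (i + j) = n + j)%N by lia.
by rewrite !modnDl !modn_small // => /eqP.
Qed.

Lemma part2 (C : 'M[F]_n) : (0 < \rank C)%N -> irreducible_code A C ->
  faithful_code A C ->
  [/\ acts_regularly A C, \rank C = 2%N & equidistant C q].
Proof.
move=> rC irr fth.
have [r2 _] := part1 rC irr.
have q2 := q_gt1.
have q1 : (0 < q.-1)%N by move: q2; case: (q) => // [[]].
have rk2 : \rank C = 2%N.
  case: (eqVneq (\rank C) 1%N) => [r1|r1]; last first.
    by move: rC r2 r1; case: (\rank C) => [|[|[|]]].
  exfalso; have [u [b [uC u0 Cu uk bn]]] := rank1 irr r1.
  have b0 : b != 0 by apply: contraNneq c_neq0 => b00; rewrite -bn b00 expr0n.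
  have : u *m A ^+ q.-1 = u by rewrite uk expf_q1 // scale1r.
  move/(stab_pow irr fth uC u0)/A_order/dvdn_leq.
  move/(_ q1); rewrite mulnC -{2}[q.-1]muln1 leq_pmul2l //.
  by move=> h; lia.
have [x CQ] := quad irr rC.
have st : invariant A C by case: irr.
have vCk : forall (v : 'rV[F]_n) e, (v <= C)%MS -> (v *m A ^+ e <= C)%MS.
  by move=> v e vC; apply: submx_trans (submxMr _ vC) (stX _ st).
have vnz : forall (v : 'rV[F]_n) e, v != 0 -> v *m A ^+ e != 0.
  by move=> v e v0; apply: contra v0 => /eqP /Aunit ->.
have trans : forall u v : 'rV[F]_n, (u <= C)%MS -> u != 0 -> (v <= C)%MS -> v != 0 ->
     exists m : nat, u *m A ^+ m = v.
  move=> u v uC u0 vC v0.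
  have Cu := span_big irr CQ uC u0.
  pose N := (n * q.-1)%N.
  pose fo (m : 'I_N) := u *m A ^+ m.
  have finj : injective fo.
    have key : forall i j : 'I_N, (i < j)%N -> fo i = fo j -> False.
      move=> i j lt h.
      have := exp_eqN irr fth uC u0 (ltnW lt) h.
      move/dvdn_leq; rewrite subn_gt0 => /(_ lt).
      have := leq_ltn_trans (leq_subr i j) (ltn_ord j).
      by move=> h1 h2; move: (leq_trans h1 h2); rewrite ltnn.
    move=> i j h; apply: val_inj => /=.
    case: (ltngtP i j) => [lt|lt|//]; first by case: (key _ _ lt h).
    by case: (key _ _ lt (esym h)).
  pose T := [set w : 'rV[F]_n | (w <= C)%MS && (w != 0)].
  have sub1 : fo @: setT \subset T.
    apply/subsetP => w /imsetP [m _ ->]; rewrite inE; apply/andP; split.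
      exact: vCk.
    exact: vnz.
  pose g (xy : F * F) := xy.1 *: u + xy.2 *: (u *m A).
  have sub2 : T \subset g @: [set~ (0, 0)].
    apply/subsetP => w; rewrite inE => /andP [wC w0].
    have [al [be we]] := dec Cu wC.
    apply/imsetP; exists (al, be); last by rewrite we.
    rewrite !inE; apply: contra w0; rewrite xpair_eqE => /andP [/eqP a0 /eqP b0].
    by rewrite we a0 b0 !scale0r addr0.
  have cT : (#|T| <= N)%N.
    apply: leq_trans (subset_leq_card sub2) _; apply: leq_trans (leq_imset_card _ _) _.
    rewrite cardsC1 card_prod /N; move: q2; case: (q) => // k _; nia.
  have : T \subset fo @: setT.
    by rewrite -(geq_leqif (subset_leqif_card sub1)) card_imset // cardsT card_ord.
  move/subsetP/(_ v); rewrite inE vC v0 => /(_ isT) /imsetP [m _ ->].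
  by exists m.
split => //.
- split; first exact: trans.
  by move=> u m uC u0; apply: (stab_pow irr fth uC u0).
- move=> v vC v0.
  have [w [wC w0 w00]] := zero_vec irr rk2.
  have [m wm] := trans w v wC w0 vC v0.
  pose k := sh 0 m.
  have vk : v 0 k = 0 by rewrite -wm transport w00 mul0r.
  have two : forall i j : 'I_n, v 0 i = 0 -> v 0 j = 0 -> i = j.
    move=> i j vi vj.
    have zi : (v *m A ^+ (n - i)) 0 0 = 0 by rewrite -(sh_n i) transport vi mul0r.
    have zj : (v *m A ^+ (n - j)) 0 0 = 0 by rewrite -(sh_n j) transport vj mul0r.
    have [l hl] := one_dim irr CQ (vCk _ _ vC) (vnz _ (n - i)%N v0) zi (vCk _ (n - j)%N vC) zj.
    have l0 : l != 0.
      by apply: contra (vnz _ (n - j)%N v0) => /eqP l0; rewrite hl l0 scale0r.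
    have [t lt] := c_gen l0.
    have h : v *m A ^+ (n - j) = v *m A ^+ (n - i + n * t).
      by rewrite hl exprD mulmxA Apow_nk mul_mx_scalar lt.
    apply: val_inj; apply: (@modfact _ _ t (ltn_ord i) (ltn_ord j)).
    have dn : forall e1 e2, (e1 <= e2)%N -> v *m A ^+ e1 = v *m A ^+ e2 ->
        (e2 %% n = e1 %% n)%N.
      move=> e1 e2 le h12; apply/eqP; rewrite eqn_mod_dvd //.
      exact: dvdn_trans (dvdn_mulr _ (dvdnn n)) (exp_eqN irr fth vC v0 le h12).
    case: (leqP (n - j) (n - i + n * t)) => le.
      by rewrite (dn _ _ le h).
    by rewrite (dn _ _ (ltnW le) (esym h)).
  rewrite /wt.
  have -> : [set j | v 0 j != 0] = [set~ k].
    apply/setP => j; rewrite !inE; case: (eqVneq j k) => [->|jk]; first by rewrite vk eqxx.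
    by apply/negP => /eqP /(two _ _) /(_ vk) /eqP; rewrite (negbTE jk).
  by rewrite cardsC1 card_ord.
Qed.

Lemma main (C : 'M[F]_n) : (0 < \rank C)%N -> irreducible_code A C ->
  (\rank C = 2%N \/
     [/\ \rank C = 1%N, ~~ odd #|F| & (C :=: (const_mx 1 : 'rV[F]_n))%MS])
  /\
  (faithful_code A C ->
     [/\ acts_regularly A C, \rank C = 2%N & equidistant C #|F|]).
Proof.
move=> rC irr; split; last by move=> fth; apply: part2.
have [r2 r1] := part1 rC irr.
case: (eqVneq (\rank C) 1%N) => [e|ne]; first by right; have [h1 h2] := r1 e; split.
by left; move: rC r2 ne; case: (\rank C) => [|[|[|]]].
Qed.
End S.

Theorem lemma5p2 (F : finFieldType) (p f : nat) (eta lam : F)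
  (C : 'M[F]_(#|F|.+1)) :
  prime p -> #|F| = (p ^ f)%N ->
  (* F^* = <eta, lam>, eta of 2-power order, lam of odd order *)
  eta != 0 -> lam != 0 ->
  (exists a : nat, eta ^+ (2 ^ a)%N = 1) ->
  (exists m : nat, odd m /\ lam ^+ m = 1) ->
  (forall x : F, x != 0 -> exists i j : nat, x = eta ^+ i * lam ^+ j) ->
  (0 < \rank C)%N ->
  irreducible_code (Amat eta lam) C ->
  (\rank C = 2%N \/
     [/\ \rank C = 1%N, ~~ odd #|F| & (C :=: (const_mx 1 : 'rV[F]_(#|F|.+1)))%MS])
  /\
  (faithful_code (Amat eta lam) C ->
     [/\ acts_regularly (Amat eta lam) C, \rank C = 2%N & equidistant C #|F|]).
Proof.
move=> Hp Hc eta0 lam0 [a eta_a] [m0 [m0o lam_m0]] gen rC irr.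
exact: (main eta0 lam0 eta_a m0o lam_m0 gen Hp Hc rC irr).
Qed.
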